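(* Let $\mathbf A$ be a super-paraorthomodular lattice and $\mathrm{Sh}(\mathbf A)=\{a\in A: a\land a'=0\}$. Then $(\mathrm{Sh}(\mathbf A),\leq,{}',0,1)$, with the order and involution inherited from $\mathbf A$, is a sub-orthomodular poset of $\mathbf A$.
   Context: A pseudo-Kleene lattice is an algebra $(A,\land,\lor,{}',0,1)$ that is a bounded lattice with an antitone involution ${}'$ ($x\leq y\Rightarrow y'\leq x'$, $x''=x$) satisfying $x\land x'\leq y\lor y'$. It is super-paraorthomodular if for all $x,y$: (SP1) $x\leq y$ and $x'\land y=(x\land x')\lor(y\land y')$ imply $y\land(x\lor x')=x\lor(y\land y')$; (SP2) $x\leq y$ implies $(x\land x')\lor(y\land y')=(x'\land y)\land(x'\land y)'$. An orthomodular poset is a bounded poset $(P,\leq,0,1)$ with antitone involution ${}'$ such that: $x\land x'=0$ for all $x$ (the meet exists in $P$ and is $0$); whenever $x\leq y'$ the join $x\lor y$ exists in $P$; and (paraorthomodularity) if $x\leq y$ and the meet $x'\land y$ exists and equals $0$, then $x=y$. A subset $B\subseteq A$ containing $0,1$ and closed under ${}'$ is a sub-orthomodular poset of $\mathbf A$ if $(B,\leq,{}',0,1)$ is an orthomodular poset and, for $x,y\in B$ with $x\leq y'$, the join of $x,y$ in $B$ equals their join in $\mathbf A$. *)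

(* Defs.v *)
From mathcomp Require Import all_boot all_order.
Set Implicit Arguments. Unset Strict Implicit. Unset Printing Implicit Defensive.
Import Order.TTheory.
Local Open Scope order_scope.

Section Defs.
Context {disp : Order.disp_t} {A : tbLatticeType disp}.

Definition antitone_involution (c : A -> A) : Prop :=
  (forall x y : A, x <= y -> c y <= c x) /\ (forall x : A, c (c x) = x).

Definition pseudo_Kleene (c : A -> A) : Prop :=
  antitone_involution c /\
  (forall x y : A, x `&` c x <= y `|` c y).

Definition super_paraorthomodular (c : A -> A) : Prop :=
  pseudo_Kleene c /\
  (forall x y : A, x <= y ->
     c x `&` y = (x `&` c x) `|` (y `&` c y) ->
     y `&` (x `|` c x) = x `|` (y `&` c y)) /\
  (forall x y : A, x <= y ->
     (x `&` c x) `|` (y `&` c y) = (c x `&` y) `&` c (c x `&` y)).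

Definition is_meet_in (B : A -> Prop) (x y m : A) : Prop :=
  B m /\ m <= x /\ m <= y /\ (forall z, B z -> z <= x -> z <= y -> z <= m).
Definition is_join_in (B : A -> Prop) (x y j : A) : Prop :=
  B j /\ x <= j /\ y <= j /\ (forall z, B z -> x <= z -> y <= z -> j <= z).

(* (B, <=, c, \bot, \top) with order, involution and bounds inherited from A
   is an orthomodular poset (B is assumed to contain 0, 1 and be closed
   under c, so the restricted order is bounded with antitone involution). *)
Definition orthomodular_poset_on (B : A -> Prop) (c : A -> A) : Prop :=
  B \bot /\ B \top /\ (forall x, B x -> B (c x)) /\
  antitone_involution c /\
  (forall x, B x -> is_meet_in B x (c x) \bot) /\
  (forall x y, B x -> B y -> x <= c y -> exists j, is_join_in B x y j) /\
  (forall x y, B x -> B y -> x <= y -> is_meet_in B (c x) y \bot -> x = y).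

Definition sub_orthomodular_poset (B : A -> Prop) (c : A -> A) : Prop :=
  orthomodular_poset_on B c /\
  (forall x y j, B x -> B y -> x <= c y -> is_join_in B x y j -> j = x `|` y).

Definition Sh (c : A -> A) : A -> Prop := fun a => a `&` c a = \bot.
End Defs.

(* Main.v *)
Require Import Defs.
From mathcomp Require Import all_boot all_order.
Import Order.TTheory.
Local Open Scope order_scope.

Theorem lemma3p18 (disp : Order.disp_t) (A : tbLatticeType disp) (c : A -> A) :
  super_paraorthomodular c -> sub_orthomodular_poset (Sh c) c.
Proof.
move=> [[[anti inv] _] [SP1 SP2]].
have dmU : forall a b : A, c (a `|` b) = c a `&` c b.
  move=> a b; apply/le_anti/andP; split.
    by rewrite lexI (anti _ _ (leUl a b)) (anti _ _ (leUr b a)).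
  rewrite -[_ `&` _]inv; apply: (anti).
  rewrite leUx -{1}[a]inv -{2}[b]inv.
  by rewrite (anti _ _ (leIl (c a) (c b))) (anti _ _ (leIr (c b) (c a))).
have ctop : c \top = \bot.
  apply/le_anti; rewrite le0x andbT -[\bot in X in _ <= X]inv.
  by apply: (anti); rewrite lex1.
have cbot : c \bot = \top by rewrite -ctop inv.
have shJ : forall x y : A, Sh c x -> Sh c y -> x <= c y -> Sh c (x `|` y).
  move=> x y Hx Hy le; rewrite /Sh dmU.
  have := SP2 _ _ le; rewrite Hx inv (meetC (c y) y) Hy joinxx.
  have -> : c (c x `&` c y) = x `|` y by rewrite -dmU inv.
  by rewrite meetC => <-.
have joinok : forall x y j, Sh c x -> Sh c y -> x <= c y ->
    is_join_in (Sh c) x y j -> j = x `|` y.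
  move=> x y j Hx Hy le [Bj [xj [yj jl]]].
  apply/le_anti/andP; split; first by apply: jl; [exact: shJ | exact: leUl | exact: leUr].
  by rewrite leUx xj yj.
split=> //.
split; first by rewrite /Sh meet0x.
split; first by rewrite /Sh ctop meetx0.
split; first by move=> x Hx; rewrite /Sh inv meetC.
split; first by [].
split.
  move=> x Hx; split; first by rewrite /Sh meet0x.
  split; first exact: le0x. split; first exact: le0x.
  by move=> z _ z1 z2; rewrite -Hx lexI z1 z2.
split.
  move=> x y Hx Hy le; exists (x `|` y); split; first exact: shJ.
  split; first exact: leUl. split; first exact: leUr.
  by move=> z _ xz yz; rewrite leUx xz yz.
move=> x y Hx Hy le [_ [_ [_ mt]]].
have sh : Sh c (c x `&` y).
  by rewrite /Sh -(SP2 _ _ le) Hx Hy joinxx.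
have e0 : c x `&` y = \bot.
  by apply/le_anti; rewrite le0x andbT mt ?leIl ?leIr.
have := SP1 _ _ le; rewrite e0 Hx Hy joinxx => /(_ erefl).
have -> : x `|` c x = \top.
  by rewrite -[_ `|` _]inv dmU inv meetC Hx cbot.
by rewrite meetx1 joinx0 => ->.
Qed.
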